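(* Under no direct effect, the MAR assumption $\pi_\beta(R\mid X_{(1)})=\pi_\beta(R\mid X_o)$, consistency, no interference, static features and semi-offline positivity, the total-cost semi-offline value functions $$Q^t_{Semi}=\mathbb{E}_{p'}\Big[\sum_{\tau=t}^T C'^\tau_{(\overline\pi^{t+1}_\alpha)}\,\Big|\,\underline X'^{t-1},\underline A'^t,X_o\Big],\qquad V^t_{Semi}=\mathbb{E}_{p'}\Big[\sum_{\tau=t+1}^T C'^\tau_{(\overline\pi^{t+1}_\alpha)}\,\Big|\,\underline X'^t,\underline A'^t,X_o\Big]$$ satisfy $$Q_{Semi}(\underline X'^{t-1},\underline A'^t,X_o)=\mathbb{E}[C'^t\mid\underline X'^{t-1},\underline A'^t,X_o]+\sum_{X'^t}V_{Semi}(\underline X'^t,\underline A'^t,X_o)\,p(X'^t\mid\underline X'^{t-1},A'^t,X_o),$$ $$V_{Semi}(\underline X'^t,\underline A'^t,X_o)=\sum_{A'^{t+1}}Q_{Semi}(\underline X'^t,\underline A'^{t+1},X_o)\,\pi_\alpha(A'^{t+1}\mid\underline X'^t,\underline A'^t).$$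
   Context: Setting: full features $X_{(1)}\in\mathbb{R}^{d_x}$ (finitely valued), label $Y$, missingness $R\in\{0,1\}^{d_x}$ with mechanism $\pi_\beta$; $X_o$ a subset of coordinates always observed. AFA policy $\pi_\alpha(A^t\mid\underline X^{t-1},\underline A^{t-1})$ with actions in $\{1,\dots,d_x+1\}$ (acquire feature $i$ or stop at step $T$), free features $X^0$, $\underline X^t=(X^0,\dots,X^t)$, $\underline A^t=(A^1,\dots,A^t)$. Per-step costs: $C^t$ is the deterministic acquisition cost of $A^t$ for $t<T$ and the misclassification cost $g(C_{mc}\mid Y,Y^* )$ for $t=T$, with $Y^*$ from a fixed deterministic classifier of $(\underline X^{T-1},\underline A^T)$. Semi-offline sampling distribution $p'$: $(X_{(1)},Y,R)\sim p$, actions from a blocked simulation policy $\pi'_{sim}(A'^t\mid\underline X'^{t-1},\underline A'^{t-1},R)$ (never acquires features with $R_i=0$; otherwise positive wherever the simulation policy $\pi_{sim}$ is; $\pi_{sim}$ satisfies off-policy positivity w.r.t. $\pi_\alpha$), revealed features $X'^t=X_{(1),A'^t}$, simulated per-step costs $C'^t$. $C'^\tau_{(\overline\pi^{t+1}_\alpha)}$ is the potential outcome of $C'^\tau$ had actions from step $t+1$ onward followed $\pi_\alpha$. Semi-offline positivity: if a trajectory $(\underline x'^{T-1},\underline a'^T,x_o)$ has positive probability under $\pi_\alpha$ and the feature distribution, then $\pi_\beta(R\ge r'\mid x_o)>0$, with $r'$ the indicator of features acquired in $\underline a'^T$ and $\ge$ componentwise. *)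

(* Defs.v *)
From HB Require Import structures.
From mathcomp Require Import all_boot all_order all_algebra.

Set Implicit Arguments.
Unset Strict Implicit.
Unset Printing Implicit Defensive.

Import Order.TTheory GRing.Theory Num.Theory.
Local Open Scope ring_scope.

Section AFA.
Variables (R : realFieldType) (d : nat) (V Y K : finType).

Definition feat := {ffun 'I_d -> V}.
Definition miss := {ffun 'I_d -> bool}.
(* actions {1..d_x+1}: Some i = acquire feature i, None = stop *)
Definition act := option 'I_d.
(* a history of acquisitions: the list of (A^k, X^k) pairs, k = 1..t *)
Definition hist := seq ('I_d * V).

Record afa := AFA {
  obs   : {set 'I_d};                  (* indices of X_o (always observed) *)
  free  : {set 'I_d};                  (* indices of the free features X^0 *)
  pXY   : feat -> Y -> R;
  piB   : feat -> miss -> R;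
  piA   : hist -> hist -> act -> R;    (* pi_alpha(A^t | X^0, history) *)
  piSim : hist -> hist -> act -> R;    (* pi_sim(A^t | X^0, history) *)
  piS   : hist -> hist -> miss -> act -> R; (* blocked pi'_sim(A^t | X^0, hist, R) *)
  acost : 'I_d -> R;                   (* deterministic acquisition costs *)
  gmc   : Y -> Y -> K -> R;            (* g(C_mc | Y, Ystar) over finite support K *)
  cval  : K -> R;
  clf   : hist -> hist -> Y;           (* deterministic classifier Ystar *)
  Hz    : nat                          (* horizon bound: T <= Hz + 1 *)
}.

Variable M : afa.

Definition freeX (x : feat) : hist := [seq (i, x i) | i <- enum (free M)].
Definition agree (x xo : feat) : bool := [forall i in obs M, x i == xo i].
(* static features: revealed X^k = X_(1),A^k *)
Definition consistent (x : feat) (h : hist) : bool := all (fun p => x p.1 == p.2) h.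

Fixpoint wpath (f : hist -> act -> R) (pre rest : hist) : R :=
  match rest with
  | [::] => 1
  | p :: rest' => f pre (Some p.1) * wpath f (rcons pre p) rest'
  end.

Definition wsim (x : feat) (r : miss) (h : hist) : R :=
  wpath (fun h' a => piS M (freeX x) h' r a) [::] h.

Definition Emc (y ys : Y) : R := \sum_(k : K) gmc M y ys k * cval M k.

Definition Ec (x : feat) (y : Y) (h : hist) (a : act) : R :=
  match a with
  | Some i => acost M i
  | None => Emc y (clf M (freeX x) h)
  end.

(* expected sum of the remaining (potential-outcome) costs when all
   further actions follow pi_alpha, with features revealed from X_(1)
   (n = remaining fuel) *)
Fixpoint Vcf (n : nat) (x : feat) (y : Y) (h : hist) : R :=
  \sum_(a : act) piA M (freeX x) h a *
     (Ec x y h a +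
      match a with
      | Some i => if n is n'.+1 then Vcf n' x y (rcons h (i, x i)) else 0
      | None => 0
      end).

(* E[ sum_{tau=t+1}^T C^tau_(pi_alpha from t+1) | X_(1)=x, Y=y, history h ] *)
Definition Vpo (h : hist) (x : feat) (y : Y) : R := Vcf (Hz M - size h) x y h.

(* E[ sum_{tau=t}^T C^tau_(pi_alpha from t+1) | X_(1)=x, Y=y, history h, A^t=a ] *)
Definition Ccf (h : hist) (a : act) (x : feat) (y : Y) : R :=
  Ec x y h a +
  match a with
  | Some i => Vpo (rcons h (i, x i)) x y
  | None => 0
  end.

(* p'-weight of (X_(1)=x, Y=y, R=r, sampled history h, X_o = xo) *)
Definition wprefix (x : feat) (y : Y) (r : miss) (h : hist) (xo : feat) : R :=
  pXY M x y * piB M x r * (agree x xo)%:R * (consistent x h)%:R * wsim x r h.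

(* p'( history h, A^t = a, X_o = xo ) *)
Definition probQ (h : hist) (a : act) (xo : feat) : R :=
  \sum_(x : feat) \sum_(y : Y) \sum_(r : miss)
     wprefix x y r h xo * piS M (freeX x) h r a.

(* E_{p'}[ F | history h, A^t = a, X_o = xo ] *)
Definition condQ (F : feat -> Y -> R) (h : hist) (a : act) (xo : feat) : R :=
  (\sum_(x : feat) \sum_(y : Y) \sum_(r : miss)
     wprefix x y r h xo * piS M (freeX x) h r a * F x y) / probQ h a xo.

(* p'( history h, X_o = xo ) *)
Definition probV (h : hist) (xo : feat) : R :=
  \sum_(x : feat) \sum_(y : Y) \sum_(r : miss) wprefix x y r h xo.

Definition Qsemi (h : hist) (a : act) (xo : feat) : R := condQ (Ccf h a) h a xo.
Definition Vsemi (h : hist) (xo : feat) : R :=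
  (\sum_(x : feat) \sum_(y : Y) \sum_(r : miss) wprefix x y r h xo * Vpo h x y)
  / probV h xo.

Definition ECsemi (h : hist) (a : act) (xo : feat) : R :=
  condQ (fun x y => Ec x y h a) h a xo.

(* p( X_(1),i = v | revealed features of h, X_o = xo ) under the data law p *)
Definition pcond (h : hist) (i : 'I_d) (v : V) (xo : feat) : R :=
  (\sum_(x : feat) \sum_(y : Y)
      pXY M x y * (agree x xo)%:R * (consistent x (rcons h (i, v)))%:R)
  / (\sum_(x : feat) \sum_(y : Y)
      pXY M x y * (agree x xo)%:R * (consistent x h)%:R).

Definition reachA (x0 : hist) (h : hist) : R := wpath (piA M x0) [::] h.

Definition pmf_conditions : Prop :=
  ((forall x y, 0 <= pXY M x y) /\ \sum_(x : feat) \sum_(y : Y) pXY M x y = 1) /\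
      ((forall x r, 0 <= piB M x r) /\ (forall x, \sum_(r : miss) piB M x r = 1)) /\
      ((forall x0 h a, 0 <= piA M x0 h a) /\ (forall x0 h, \sum_(a : act) piA M x0 h a = 1)) /\
      ((forall x0 h a, 0 <= piSim M x0 h a) /\ (forall x0 h, \sum_(a : act) piSim M x0 h a = 1)) /\
      ((forall x0 h r a, 0 <= piS M x0 h r a) /\
        (forall x0 h r, \sum_(a : act) piS M x0 h r a = 1)) /\
      ((forall y ys k, 0 <= gmc M y ys k) /\ (forall y ys, \sum_(k : K) gmc M y ys k = 1)).

Definition MAR : Prop :=
  forall (x x' : feat) (r : miss),
    (forall i, i \in obs M -> x i = x' i) -> piB M x r = piB M x' r.

Definition obs_always : Prop :=
  forall (x : feat) (r : miss) i, 0 < piB M x r -> i \in obs M -> r i.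

Definition free_observed : Prop := free M \subset obs M.

Definition blocked : Prop :=
  forall x0 h (r : miss) i, ~~ r i -> piS M x0 h r (Some i) = 0.

Definition sim_support : Prop :=
  forall x0 h (r : miss) (a : act),
    (if a is Some i then r i else true) ->
    0 < piSim M x0 h a -> 0 < piS M x0 h r a.

Definition offpolicy_pos : Prop :=
  forall x0 h (a : act), 0 < piA M x0 h a -> 0 < piSim M x0 h a.

Definition horizon : Prop :=
  forall x0 h i, (Hz M <= size h)%N ->
    [/\ piA M x0 h (Some i) = 0, piSim M x0 h (Some i) = 0
      & forall r, piS M x0 h r (Some i) = 0].

Definition acquired (h : hist) : miss := [ffun i => i \in [seq p.1 | p <- h]].

(* pi_beta( R >= r' | X_o = xo ) *)
Definition piB_ge (xo : feat) (r' : miss) : R :=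
  (\sum_(x : feat) \sum_(y : Y) pXY M x y * (agree x xo)%:R *
      \sum_(r : miss | [forall i, r' i ==> r i]) piB M x r)
  / (\sum_(x : feat) \sum_(y : Y) pXY M x y * (agree x xo)%:R).

Definition traj_prob_A (xo : feat) (h : hist) : R :=
  \sum_(x : feat) \sum_(y : Y)
     pXY M x y * (agree x xo)%:R * (consistent x h)%:R *
     wpath (piA M (freeX x)) [::] h * piA M (freeX x) h None.

Definition semi_offline_pos : Prop :=
  forall (xo : feat) (h : hist),
    0 < traj_prob_A xo h -> 0 < piB_ge xo (acquired h).

End AFA.

(* Main.v *)
Require Import Defs.
From HB Require Import structures.
From mathcomp Require Import all_boot all_order all_algebra.
From mathcomp Require Import ring lra zify.
Import Order.TTheory GRing.Theory Num.Theory.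
Local Open Scope ring_scope.

Section Proof.
Variables (R : realFieldType) (d : nat) (V Y K : finType) (M : afa R d V Y K).

Lemma sum_neq0 (I : finType) (F : I -> R) : \sum_i F i != 0 -> exists i, F i != 0.
Proof.
move=> H; case: (pickP (fun i => F i != 0)) => [i Hi|H0]; first by exists i.
by rewrite big1 ?eqxx // in H => i _; apply/eqP/negbFE/H0.
Qed.

Lemma sum_gt0 (I : finType) (F : I -> R) j :
  (forall i, 0 <= F i) -> 0 < F j -> 0 < \sum_i F i.
Proof.
move=> H0 Hj; rewrite (bigD1 j) //=; apply: ltr_wpDr => //.
by apply: sumr_ge0.
Qed.

Lemma wpath_rcons (f : hist d V -> act d -> R) pre rest p :
  wpath f pre (rcons rest p) = wpath f pre rest * f (pre ++ rest) (Some p.1).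
Proof.
elim: rest pre => [|q rest IH] pre /=; first by rewrite cats0 mulr1 mul1r.
by rewrite IH mulrA cat_rcons.
Qed.

Lemma wpath_ge0 (f : hist d V -> act d -> R) pre rest :
  (forall h a, 0 <= f h a) -> 0 <= wpath f pre rest.
Proof.
move=> H; elim: rest pre => [|q rest IH] pre /=; first exact: ler01.
by rewrite mulr_ge0.
Qed.

Lemma wpath_pos (f g : hist d V -> act d -> R) (P : 'I_d -> bool) pre rest :
  (forall h j, P j -> f h (Some j) != 0 -> 0 < g h (Some j)) ->
  all (fun p => P p.1) rest -> wpath f pre rest != 0 -> 0 < wpath g pre rest.
Proof.
move=> H; elim: rest pre => [|q rest IH] pre /=; first by rewrite ltr01.
move=> /andP[Pq Ha]; rewrite mulf_eq0 negb_or => /andP[H1 H2].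
by rewrite mulr_gt0 // ?H // IH.
Qed.

Hypothesis Hpmf : pmf_conditions M.
Hypothesis HMAR : MAR M.
Hypothesis Hfree : free_observed M.

Lemma agree_obs x xo : agree M x xo -> forall i, i \in obs M -> x i = xo i.
Proof. by move=> /forallP H i Hi; move: (H i); rewrite Hi => /eqP. Qed.

Lemma freeX_agree x xo : agree M x xo -> freeX M x = freeX M xo.
Proof.
move=> Ha; apply/eq_in_map => i; rewrite mem_enum => Hi.
by rewrite (agree_obs _ _ Ha) // (subsetP Hfree).
Qed.

Lemma piB_agree x xo r : agree M x xo -> piB M x r = piB M xo r.
Proof. by move=> Ha; apply: HMAR; apply: (agree_obs _ _ Ha). Qed.

Lemma wsim_agree x xo r h : agree M x xo -> wsim M x r h = wsim M xo r h.
Proof. by move=> Ha; rewrite /wsim (freeX_agree _ _ Ha). Qed.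

Lemma KF (G : hist d V -> miss d -> R) (F : feat d V -> Y -> R) h xo :
  \sum_(x : feat d V) \sum_(y : Y) \sum_(r : miss d)
     wprefix M x y r h xo * G (freeX M x) r * F x y
  = (\sum_(r : miss d) piB M xo r * wsim M xo r h * G (freeX M xo) r) *
    \sum_(x : feat d V) \sum_(y : Y)
      pXY M x y * (agree M x xo)%:R * (consistent x h)%:R * F x y.
Proof.
rewrite mulr_sumr; apply: eq_bigr => x _; rewrite mulr_sumr; apply: eq_bigr => y _.
rewrite /wprefix; case Ha: (agree M x xo).
- rewrite (freeX_agree _ _ Ha) mulr_suml; apply: eq_bigr => r _.
  rewrite (piB_agree _ _ _ Ha) (wsim_agree _ _ _ _ Ha); ring.
- rewrite big1 ?(mulr0, mul0r) // => r _; by rewrite !(mulr0, mul0r).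
Qed.

Definition cw (x : feat d V) (y : Y) h xo :=
  pXY M x y * (agree M x xo)%:R * (consistent x h)%:R.
Definition SS h xo (G : miss d -> R) :=
  \sum_(r : miss d) piB M xo r * wsim M xo r h * G r.
Definition EE (F : feat d V -> Y -> R) h xo :=
  \sum_(x : feat d V) \sum_(y : Y) cw x y h xo * F x y.

Lemma KFg (L : feat d V -> Y -> miss d -> R) (G : hist d V -> miss d -> R)
   (F : feat d V -> Y -> R) h xo :
  (forall x y r, L x y r = wprefix M x y r h xo * G (freeX M x) r * F x y) ->
  \sum_(x : feat d V) \sum_(y : Y) \sum_(r : miss d) L x y r
  = SS h xo (G (freeX M xo)) * EE F h xo.
Proof.
move=> HL; rewrite -KF; apply: eq_bigr => x _; apply: eq_bigr => y _.
by apply: eq_bigr => r _.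
Qed.

Lemma probQ_eq h a xo : probQ M h a xo =
  SS h xo (fun r => piS M (freeX M xo) h r a) * EE (fun _ _ => 1) h xo.
Proof.
apply: (eq_trans _ (KF (fun f r => piS M f h r a) (fun _ _ => 1) h xo)).
do 3 (apply: eq_bigr => ? _); by rewrite mulr1.
Qed.

Lemma condQ_eq F h a xo : condQ M F h a xo =
  SS h xo (fun r => piS M (freeX M xo) h r a) * EE F h xo /
  (SS h xo (fun r => piS M (freeX M xo) h r a) * EE (fun _ _ => 1) h xo).
Proof.
rewrite /condQ probQ_eq; congr (_ / _).
apply: (eq_trans _ (KF (fun f r => piS M f h r a) F h xo)).
by do 3 (apply: eq_bigr => ? _).
Qed.

Lemma probV_eq h xo : probV M h xo =
  SS h xo (fun _ => 1) * EE (fun _ _ => 1) h xo.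
Proof.
apply: (eq_trans _ (KF (fun f r => 1) (fun _ _ => 1) h xo)).
by do 3 (apply: eq_bigr => ? _); rewrite !mulr1.
Qed.

Lemma Vsemi_eq h xo : Vsemi M h xo =
  SS h xo (fun _ => 1) * EE (Vpo M h) h xo /
  (SS h xo (fun _ => 1) * EE (fun _ _ => 1) h xo).
Proof.
rewrite /Vsemi probV_eq; congr (_ / _).
apply: (eq_trans _ (KF (fun f r => 1) (Vpo M h) h xo)).
by do 3 (apply: eq_bigr => ? _); rewrite !mulr1.
Qed.

Lemma cons_rcons (x : feat d V) h i v :
  ((consistent x (rcons h (i, v)))%:R : R) = (consistent x h)%:R * (x i == v)%:R.
Proof. by rewrite /consistent all_rcons -natrM mulnC mulnb. Qed.

Lemma wprefix_rcons x y r h i v xo :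
  wprefix M x y r (rcons h (i, v)) xo =
  wprefix M x y r h xo * piS M (freeX M x) h r (Some i) * (x i == v)%:R.
Proof.
rewrite /wprefix /wsim wpath_rcons cat0s cons_rcons /=; ring.
Qed.

Lemma probV_rcons h i v xo : probV M (rcons h (i, v)) xo =
  SS h xo (fun r => piS M (freeX M xo) h r (Some i)) *
  EE (fun x _ => (x i == v)%:R) h xo.
Proof.
apply: (eq_trans _ (KF (fun f r => piS M f h r (Some i)) (fun x _ => (x i == v)%:R) h xo)).
by do 3 (apply: eq_bigr => ? _); rewrite wprefix_rcons.
Qed.

Lemma Vsemi_rcons h i v xo : Vsemi M (rcons h (i, v)) xo =
  SS h xo (fun r => piS M (freeX M xo) h r (Some i)) *
  EE (fun x y => (x i == v)%:R * Vpo M (rcons h (i, v)) x y) h xo /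
  (SS h xo (fun r => piS M (freeX M xo) h r (Some i)) *
   EE (fun x _ => (x i == v)%:R) h xo).
Proof.
rewrite /Vsemi probV_rcons; congr (_ / _).
apply: (eq_trans _ (KF (fun f r => piS M f h r (Some i)) (fun x y => (x i == v)%:R * Vpo M (rcons h (i, v)) x y) h xo)).
by do 3 (apply: eq_bigr => ? _); rewrite wprefix_rcons mulrA.
Qed.

Lemma pcond_eq h i v xo : pcond M h i v xo =
  EE (fun x _ => (x i == v)%:R) h xo / EE (fun _ _ => 1) h xo.
Proof.
rewrite /pcond /EE /cw; congr (_ / _); apply: eq_bigr => x _;
  apply: eq_bigr => y _; by rewrite ?cons_rcons ?mulr1 ?mulrA.
Qed.

Lemma pXY_ge0 x y : 0 <= pXY M x y.
Proof. by case: Hpmf => [[H _] _]. Qed.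

Lemma cw_ge0 x y h xo : 0 <= cw x y h xo.
Proof. by rewrite /cw !mulr_ge0 ?ler0n ?pXY_ge0. Qed.

Lemma sum_ind (f : V -> R) (w : V) :
  \sum_(v : V) (w == v)%:R * f v = f w.
Proof.
rewrite (bigD1 w) //= eqxx mul1r big1 ?addr0 // => v Hv.
by rewrite eq_sym (negbTE Hv) mul0r.
Qed.

Lemma part1 h a xo : 0 < probQ M h a xo ->
     Qsemi M h a xo =
       ECsemi M h a xo +
       match a with
       | Some i => \sum_(v : V) Vsemi M (rcons h (i, v)) xo * pcond M h i v xo
       | None => 0
       end.
Proof.
rewrite probQ_eq /Qsemi /ECsemi !condQ_eq.
set S := SS _ _ _; set D := EE _ h xo => Hp.
have : S * D != 0 by rewrite gt_eqF.
rewrite mulf_eq0 negb_or => /andP[HS HD].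
case: a @S HS Hp => [i|] S HS Hp.
- under eq_bigr => v _ do rewrite Vsemi_rcons pcond_eq -/S -/D.
  have -> : EE (Ccf M h (Some i)) h xo =
     EE (fun x y => Ec M x y h (Some i)) h xo +
     \sum_(v : V) EE (fun x y => (x i == v)%:R * Vpo M (rcons h (i, v)) x y) h xo.
    rewrite /EE [X in _ = _ + X]exchange_big /= -big_split /=; apply: eq_bigr => x _.
    rewrite [X in _ = _ + X]exchange_big /= -big_split /=; apply: eq_bigr => y _.
    by rewrite -mulr_sumr -mulrDr sum_ind.
  rewrite mulrDr mulrDl; congr (_ + _); rewrite mulr_sumr mulr_suml.
  apply: eq_bigr => v _.
  set Pv := EE (fun x _ => (x i == v)%:R) h xo.
  set Nv := EE _ h xo.
  have [Pv0|HPv] := eqVneq Pv 0.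
  + have -> : Nv = 0.
      have Hnn : forall x', true -> 0 <= \sum_y cw x' y h xo * (x' i == v)%:R.
        by move=> x' _; apply: sumr_ge0 => y _; rewrite mulr_ge0 ?cw_ge0.
      have H0 := psumr_eq0P Hnn Pv0.
      rewrite /Nv /EE big1 // => x _; rewrite big1 // => y _.
      have Hnn' : forall y', true -> 0 <= cw x y' h xo * (x i == v)%:R.
        by move=> y' _; rewrite mulr_ge0 ?cw_ge0.
      have Hy : cw x y h xo * (x i == v)%:R = 0.
        by apply: (psumr_eq0P Hnn' (H0 x isT)).
      by rewrite mulrA Hy mul0r.
    by rewrite Pv0 !(mulr0, mul0r).
  + by field; rewrite HS HPv HD.
- rewrite addr0; have -> // : EE (Ccf M h None) h xo = EE (fun x y => Ec M x y h None) h xo.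
  by apply: eq_bigr => x _; apply: eq_bigr => y _; rewrite /Ccf addr0.
Qed.

Hypothesis Hsim : sim_support M.
Hypothesis Hoff : offpolicy_pos M.
Hypothesis Hhor : horizon M.
Hypothesis Hsop : semi_offline_pos M.

Lemma piA_ge0 f h a : 0 <= piA M f h a.
Proof. by case: Hpmf => _ [_ [[H _] _]]. Qed.
Lemma piA_sum f h : \sum_a piA M f h a = 1.
Proof. by case: Hpmf => _ [_ [[_ H] _]]. Qed.
Lemma piB_ge0 x r : 0 <= piB M x r.
Proof. by case: Hpmf => _ [[H _] _]. Qed.
Lemma piS_ge0 f h r a : 0 <= piS M f h r a.
Proof. by case: Hpmf => _ [_ [_ [_ [[H _] _]]]]. Qed.

Lemma sum_neq0P (I : finType) (P : pred I) (F : I -> R) :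
  \sum_(i | P i) F i != 0 -> exists2 i, P i & F i != 0.
Proof.
move=> H; case: (pickP (fun i => P i && (F i != 0))) => [i /andP[Hi1 Hi2]|H0].
  by exists i.
rewrite big1 ?eqxx // in H => i Hi; apply/eqP; move: (H0 i); rewrite Hi /=.
by move/negbFE.
Qed.

Lemma nat_neq0 (b : bool) : (b%:R : R) != 0 -> b.
Proof. by case: b; rewrite ?eqxx. Qed.

Lemma pos_of (z : R) : 0 <= z -> z != 0 -> 0 < z.
Proof. by move=> H1 H2; rewrite lt0r H1 H2. Qed.

Lemma ext (x0 : feat d V) (fx : hist d V) n : forall h',
  (Hz M - size h' <= n)%N -> consistent x0 h' -> wpath (piA M fx) [::] h' != 0 ->
  exists h'', [/\ {subset [seq p.1 | p <- h'] <= [seq p.1 | p <- h'']},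
     consistent x0 h'' & wpath (piA M fx) [::] h'' * piA M fx h'' None != 0].
Proof.
elim: n => [|n IH] h' Hn Hc Hw.
all: case: (eqVneq (piA M fx h' None) 0) => HN.
all: try by exists h'; split => //; rewrite mulf_neq0.
all: have : \sum_a piA M fx h' a != 0 by rewrite piA_sum oner_eq0.
all: move=> /sum_neq0 [[j|] Hj]; rewrite ?HN ?eqxx // in Hj.
all: have Hs : (size h' < Hz M)%N by
     rewrite ltnNge; apply/negP => Hle; case: (Hhor fx h' j Hle) => H _ _;
     rewrite H eqxx in Hj.
- lia.
- have [|||h'' [Hsub Hc'' Hw'']] := IH (rcons h' (j, x0 j)).
  + rewrite size_rcons; lia.
  + by rewrite /consistent all_rcons /= eqxx.
  + by rewrite wpath_rcons cat0s mulf_neq0.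
  exists h''; split => // k Hk; apply: Hsub.
  by rewrite map_rcons mem_rcons in_cons Hk orbT.
Qed.

Lemma Vcf_eq n x y h : Vcf M n x y h =
  \sum_(a : act d) piA M (freeX M x) h a *
     (Ec M x y h a +
      match a with
      | Some i => if n is n'.+1 then Vcf M n' x y (rcons h (i, x i)) else 0
      | None => 0
      end).
Proof. by case: n. Qed.

Lemma Vpo_split x y h :
  Vpo M h x y = \sum_a piA M (freeX M x) h a * Ccf M h a x y.
Proof.
rewrite /Vpo Vcf_eq /Ccf; apply: eq_bigr; case => [i|] _ //.
case E: (Hz M - size h)%N => [|n].
- have Hle : (Hz M <= size h)%N by lia.
  by case: (Hhor (freeX M x) h i Hle) => -> _ _; rewrite !mul0r.
- by rewrite /Vpo size_rcons subnS E.
Qed.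

Lemma EE_Vpo h xo : EE (Vpo M h) h xo =
  \sum_a piA M (freeX M xo) h a * EE (Ccf M h a) h xo.
Proof.
rewrite /EE; under [RHS]eq_bigr => a _ do rewrite mulr_sumr.
rewrite [RHS]exchange_big; apply: eq_bigr => x _.
under [RHS]eq_bigr => a _ do rewrite mulr_sumr.
rewrite [RHS]exchange_big; apply: eq_bigr => y _.
rewrite Vpo_split mulr_sumr; apply: eq_bigr => a _.
rewrite /cw; case Ha: (agree M x xo).
- rewrite (freeX_agree _ _ Ha); ring.
- by rewrite !(mulr0, mul0r).
Qed.

Lemma Sa_pos h xo a : 0 < probV M h xo -> 0 < reachA M (freeX M xo) h ->
  piA M (freeX M xo) h a != 0 ->
  SS h xo (fun r => piS M (freeX M xo) h r a) != 0.
Proof.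
move=> HV HR Ha.
have : probV M h xo != 0 by rewrite gt_eqF.
rewrite /probV => /sum_neq0 [x0 /sum_neq0 [y0 /sum_neq0 [r0]]].
rewrite /wprefix !mulf_eq0 !negb_or => /andP[/andP[/andP[/andP[Hp Hb] Hag] Hc] Hs].
have Hag' := nat_neq0 _ Hag; have Hc' := nat_neq0 _ Hc.
have Hapos : 0 < piA M (freeX M xo) h a by rewrite pos_of ?piA_ge0.
suff [r Hr] : exists r, 0 < piB M xo r * wsim M xo r h * piS M (freeX M xo) h r a.
  rewrite gt_eqF //; apply: (@sum_gt0 _ _ r) => // r'.
  by rewrite !mulr_ge0 ?piB_ge0 ?piS_ge0 ?wpath_ge0 // => ? ?; apply: piS_ge0.
case: a Ha Hapos => [i|] Ha Hapos; last first.
  exists r0; rewrite !mulr_gt0 //.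
  - by rewrite -(piB_agree _ _ _ Hag') pos_of ?piB_ge0.
  - by rewrite -(wsim_agree _ _ _ _ Hag') pos_of ?wpath_ge0 // => ? ?; apply: piS_ge0.
  - by apply: Hsim => //; apply: Hoff.
have [|||h'' [Hsub Hc'' Hw'']] :=
  ext x0 (freeX M xo) (Hz M - size (rcons h (i, x0 i))) (rcons h (i, x0 i)).
- by [].
- by rewrite /consistent all_rcons /= eqxx.
- by rewrite wpath_rcons cat0s mulf_neq0 // gt_eqF.
have Htraj : 0 < traj_prob_A M xo h''.
  apply: (@sum_gt0 _ _ x0) => [x|].
    apply: sumr_ge0 => y _.
    by rewrite !mulr_ge0 ?pXY_ge0 ?ler0n ?piA_ge0 ?wpath_ge0 // => ? ?; apply: piA_ge0.
  apply: (@sum_gt0 _ _ y0) => [y|].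
    by rewrite !mulr_ge0 ?pXY_ge0 ?ler0n ?piA_ge0 ?wpath_ge0 // => ? ?; apply: piA_ge0.
  rewrite Hag' Hc'' (freeX_agree _ _ Hag') pos_of //.
    by rewrite !mulr_ge0 ?pXY_ge0 ?ler0n ?piA_ge0 ?wpath_ge0 // => ? ?; apply: piA_ge0.
  by rewrite -mulrA mulf_neq0 // !mulf_neq0 // pnatr_eq0.
have := Hsop _ _ Htraj; rewrite /piB_ge.
case: (eqVneq (\sum_(x : feat d V) \sum_(y : Y) pXY M x y * (agree M x xo)%:R *
      \sum_(r : miss d | [forall i, acquired h'' i ==> r i]) piB M x r) 0) => [->|].
  by rewrite mul0r ltxx.
move=> /sum_neq0 [x1 /sum_neq0 [y1]]; rewrite !mulf_eq0 !negb_or.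
move=> /andP[/andP[_ Hag1] /sum_neq0P [r Hr Hbr]] _.
have Hag1' := nat_neq0 _ Hag1.
have Hacq : forall j, j \in [seq p.1 | p <- rcons h (i, x0 i)] -> r j.
  move=> j /Hsub Hj; move/forallP: Hr => /(_ j); by rewrite ffunE Hj.
have Hposr : forall j, r j -> forall h0, piA M (freeX M xo) h0 (Some j) != 0 ->
    0 < piS M (freeX M xo) h0 r (Some j).
  move=> j Hj h0 H0; apply: Hsim => //; apply: Hoff; by rewrite pos_of ?piA_ge0.
exists r; rewrite !mulr_gt0 //.
- by rewrite (piB_agree _ _ _ Hag1') in Hbr; rewrite pos_of ?piB_ge0.
- apply: (@wpath_pos (piA M (freeX M xo)) _ (fun j => r j)).
  + by move=> h0 j Hj H0; apply: Hposr.
  + apply/allP => p Hpin; apply: Hacq.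
    by rewrite map_rcons mem_rcons in_cons (map_f fst Hpin) orbT.
  + by rewrite gt_eqF.
- apply: Hposr => //; apply: Hacq.
  by rewrite map_rcons mem_rcons in_cons eqxx.
Qed.

Lemma part2 h xo : 0 < probV M h xo -> 0 < reachA M (freeX M xo) h ->
  Vsemi M h xo = \sum_(a : act d) Qsemi M h a xo * piA M (freeX M xo) h a.
Proof.
move=> HV HR; rewrite Vsemi_eq EE_Vpo.
have := HV; rewrite probV_eq => HV'.
set S1 := SS h xo (fun _ => 1) in HV' *.
set D := EE (fun _ _ => 1) h xo in HV' *.
have : S1 * D != 0 by rewrite gt_eqF.
rewrite mulf_eq0 negb_or => /andP[HS HD].
rewrite mulr_sumr mulr_suml; apply: eq_bigr => a _.
rewrite /Qsemi condQ_eq -/D.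
case: (eqVneq (piA M (freeX M xo) h a) 0) => Ha.
  by rewrite Ha !(mulr0, mul0r).
have HSa := Sa_pos _ _ _ HV HR Ha.
by field; rewrite HS HD HSa.
Qed.

End Proof.

Theorem corollary2 (R : realFieldType) (d : nat) (V Y K : finType)
  (M : afa R d V Y K) :
  pmf_conditions M -> MAR M -> obs_always M -> free_observed M ->
  blocked M -> sim_support M -> offpolicy_pos M -> horizon M ->
  semi_offline_pos M ->
  (forall (h : hist d V) (a : act d) (xo : feat d V),
     0 < probQ M h a xo ->
     Qsemi M h a xo =
       ECsemi M h a xo +
       match a with
       | Some i => \sum_(v : V) Vsemi M (rcons h (i, v)) xo * pcond M h i v xo
       | None => 0
       end)
  /\
  (forall (h : hist d V) (xo : feat d V),
     0 < probV M h xo -> 0 < reachA M (freeX M xo) h ->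
     Vsemi M h xo = \sum_(a : act d) Qsemi M h a xo * piA M (freeX M xo) h a).
Proof.
move=> Hpmf HMAR _ Hfree _ Hsim Hoff Hhor Hsop; split.
- by move=> h a xo; apply: part1.
- by move=> h xo; apply: part2.
Qed.
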